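(* Let $\mathcal A=(a_{ij})$, $\mathcal B=(b_{ij})$ be symmetric $3\times3$ matrices (indices $0,1,2$), $\mathbf V(s,t)=(s^2,st,t^2)^T$, $\mathbf f(u)=(\mathcal A\mathbf V(u,1))\times(\mathcal B\mathbf V(u,1))$, and consider the symmetric QRT map $u_{n+1}=\frac{f^{(1)}(u_n)-u_{n-1}f^{(2)}(u_n)}{f^{(2)}(u_n)-u_{n-1}f^{(3)}(u_n)}$ with first integral $$J=\frac{\mathbf V(u_{n-1},1)^T\mathcal A\,\mathbf V(u_n,1)}{\mathbf V(u_{n-1},1)^T\mathcal B\,\mathbf V(u_n,1)}.$$ Write $u_n=p_n/q_n$ where $p_n,q_n$ satisfy $$p_{n+1}=\frac{q_{n-1}F^{(1)}_n-p_{n-1}F^{(2)}_n}{D_n},\qquad q_{n+1}=\frac{q_{n-1}F^{(2)}_n-p_{n-1}F^{(3)}_n}{D_n},$$ with $F^{(i)}_n=q_n^4f^{(i)}(p_n/q_n)$ and $D_n=\mathbf V(p_{n-1},q_{n-1})^T\mathcal B\,\mathbf V(p_n,q_n)$. Set $$a_1=a_{00}-Jb_{00},\ a_2=a_{01}-Jb_{01},\ a_3=a_{02}-Jb_{02},\ a_5=a_{12}-Jb_{12},\ a_6=a_{22}-Jb_{22},\ I=-a_{11}+Jb_{11},$$ $$\alpha=a_2a_5+a_3^2-a_1a_6+a_3I,\quad \beta=(a_1a_5-2a_2a_3)a_5+a_2^2a_6+(a_1a_6-a_3^2)I,\quad \gamma=4a_3+I,$$ and $A=-(\alpha^3+\alpha\beta\gamma+\beta^2)$,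 $B=(\beta^2-A)\alpha^2$, $C=A(A-\beta^2)$. Then $x_n=p_n$ and $x_n=q_n$ both satisfy $$x_{n+7}x_n=Ax_{n+6}x_{n+1}+Bx_{n+5}x_{n+2}+Cx_{n+4}x_{n+3}.$$
   Context: The superscripts in $f^{(i)},F^{(i)}_n$ denote the components of the vectors $\mathbf f$ and $\mathbf F_n$ (cross product of vectors in three dimensions). *)

(* Defs.v *)
From mathcomp Require Import all_boot all_order all_algebra.
Set Implicit Arguments. Unset Strict Implicit. Unset Printing Implicit Defensive.
Import GRing.Theory Num.Theory.
Local Open Scope ring_scope.

Section QRT.
Variable R : numFieldType.

Definition cmp (x : 'cV[R]_3) (k : nat) : R := x (inord k) 0.
Definition ent (M : 'M[R]_3) (i j : nat) : R := M (inord i) (inord j).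

Definition Vq (s t : R) : 'cV[R]_3 :=
  \col_(i < 3) (if (i == 0 :> nat) then s ^+ 2
                else if (i == 1 :> nat) then s * t else t ^+ 2).

Definition cross3 (x y : 'cV[R]_3) : 'cV[R]_3 :=
  \col_(i < 3) (if (i == 0 :> nat) then cmp x 1 * cmp y 2 - cmp x 2 * cmp y 1
                else if (i == 1 :> nat) then cmp x 2 * cmp y 0 - cmp x 0 * cmp y 2
                else cmp x 0 * cmp y 1 - cmp x 1 * cmp y 0).

Definition bform (M : 'M[R]_3) (x y : 'cV[R]_3) : R := (x^T *m M *m y) 0 0.

(* F_n = q_n^4 f(p_n/q_n) = (A V(p_n,q_n)) x (B V(p_n,q_n))  (homogenized) *)
Definition Fvec (A B : 'M[R]_3) (p q : R) : 'cV[R]_3 :=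
  cross3 (A *m Vq p q) (B *m Vq p q).

Definition Dn (B : 'M[R]_3) (p' q' p q : R) : R := bform B (Vq p' q') (Vq p q).

Definition Jval (A B : 'M[R]_3) (p' q' p q : R) : R :=
  bform A (Vq p' q') (Vq p q) / bform B (Vq p' q') (Vq p q).

Section Coefs.
Variables (A B : 'M[R]_3) (J : R).
Definition a1 := ent A 0 0 - J * ent B 0 0.
Definition a2 := ent A 0 1 - J * ent B 0 1.
Definition a3 := ent A 0 2 - J * ent B 0 2.
Definition a5 := ent A 1 2 - J * ent B 1 2.
Definition a6 := ent A 2 2 - J * ent B 2 2.
Definition Ic := - ent A 1 1 + J * ent B 1 1.
Definition alpha := a2 * a5 + a3 ^+ 2 - a1 * a6 + a3 * Ic.
Definition beta := (a1 * a5 - 2%:R * a2 * a3) * a5 + a2 ^+ 2 * a6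
                   + (a1 * a6 - a3 ^+ 2) * Ic.
Definition gamma := 4%:R * a3 + Ic.
Definition Acoef := - (alpha ^+ 3 + alpha * beta * gamma + beta ^+ 2).
Definition Bcoef := (beta ^+ 2 - Acoef) * alpha ^+ 2.
Definition Ccoef := Acoef * (Acoef - beta ^+ 2).
End Coefs.

Definition somos7 (Ac Bc Cc : R) (x : nat -> R) : Prop :=
  forall n, x (n + 7)%N * x n = Ac * x (n + 6)%N * x (n + 1)%N
                               + Bc * x (n + 5)%N * x (n + 2)%N
                               + Cc * x (n + 4)%N * x (n + 3)%N.
End QRT.

(* Main.v *)
Require Import Defs.
From mathcomp Require Import all_boot all_order all_algebra.
From mathcomp Require Import ring.
Import GRing.Theory Num.Theory.
Local Open Scope ring_scope.


Section Gen.
Variable R : numFieldType.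
Record tri := Tri {t0 : R; t1 : R; t2 : R}.
Record qn := Qn {u0 : R; u1 : R; u2 : R; u3 : R; u4 : R}.
Record mat := Mat {r0 : tri; r1 : tri; r2 : tri}.

Lemma tri_ext (a b : tri) : t0 a = t0 b -> t1 a = t1 b -> t2 a = t2 b -> a = b.
Proof. by case: a; case: b => /= ? ? ? ? ? ? -> -> ->. Qed.
Lemma qn_ext (a b : qn) : u0 a = u0 b -> u1 a = u1 b -> u2 a = u2 b ->
  u3 a = u3 b -> u4 a = u4 b -> a = b.
Proof. by case: a; case: b => /= ? ? ? ? ? ? ? ? ? ? -> -> -> -> ->. Qed.

Definition mul (a b : tri) : qn :=
  Qn (t0 a * t0 b) (t0 a * t1 b + t1 a * t0 b) (t0 a * t2 b + t1 a * t1 b + t2 a * t0 b)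
     (t1 a * t2 b + t2 a * t1 b) (t2 a * t2 b).
Definition tsc (c : R) (a : tri) := Tri (c * t0 a) (c * t1 a) (c * t2 a).
Definition qadd (a b : qn) := Qn (u0 a + u0 b) (u1 a + u1 b) (u2 a + u2 b) (u3 a + u3 b) (u4 a + u4 b).
Definition qsc (c : R) (a : qn) := Qn (c * u0 a) (c * u1 a) (c * u2 a) (c * u3 a) (c * u4 a).
Definition dot (a v : tri) := t0 a * t0 v + t1 a * t1 v + t2 a * t2 v.
Definition app (X : mat) (v : tri) := Tri (dot (r0 X) v) (dot (r1 X) v) (dot (r2 X) v).
Definition tcomb (c0 c1 c2 : R) (u v w : tri) :=
  Tri (c0 * t0 u + c1 * t0 v + c2 * t0 w) (c0 * t1 u + c1 * t1 v + c2 * t1 w)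
      (c0 * t2 u + c1 * t2 v + c2 * t2 w).
Definition rowmul (x : tri) (Y : mat) := tcomb (t0 x) (t1 x) (t2 x) (r0 Y) (r1 Y) (r2 Y).
Definition mmul (X Y : mat) := Mat (rowmul (r0 X) Y) (rowmul (r1 X) Y) (rowmul (r2 X) Y).
Definition mcomb (c0 c1 c2 : R) (X Y Z : mat) :=
  Mat (tcomb c0 c1 c2 (r0 X) (r0 Y) (r0 Z)) (tcomb c0 c1 c2 (r1 X) (r1 Y) (r1 Z))
      (tcomb c0 c1 c2 (r2 X) (r2 Y) (r2 Z)).
Definition Idm := Mat (Tri 1 0 0) (Tri 0 1 0) (Tri 0 0 1).
Definition Pi (p q p' q' : R) := Tri (p * p') (p * q' + q * p') (q * q').

Ltac dmat X := case: X => [[? ? ?] [? ? ?] [? ? ?]].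
Ltac dtri v := case: v => ? ? ?.

Definition psi (x y S : tri) : R :=
  2 * t0 S ^+ 2 * (t0 x * t0 y) + 2 * t0 S * t1 S * (t0 x * t1 y + t1 x * t0 y)
  + (t1 S ^+ 2 - 2 * t0 S * t2 S) * (t0 x * t2 y + t2 x * t0 y)
  + 8 * t0 S * t2 S * (t1 x * t1 y) + 2 * t1 S * t2 S * (t1 x * t2 y + t2 x * t1 y)
  + 2 * t2 S ^+ 2 * (t2 x * t2 y).
Definition Psi (X Y : mat) (S : tri) : qn :=
  Qn (psi (r0 X) (r0 Y) S) (psi (r0 X) (r1 Y) S + psi (r1 X) (r0 Y) S)
     (psi (r0 X) (r2 Y) S + psi (r1 X) (r1 Y) S + psi (r2 X) (r0 Y) S)
     (psi (r1 X) (r2 Y) S + psi (r2 X) (r1 Y) S) (psi (r2 X) (r2 Y) S).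

Definition qlin6 (c0 c1 c2 c3 c4 c5 : R) (A0 A1 A2 A3 A4 A5 : qn) :=
  qadd (qsc c0 A0) (qadd (qsc c1 A1) (qadd (qsc c2 A2) (qadd (qsc c3 A3)
    (qadd (qsc c4 A4) (qsc c5 A5))))).
Definition bilq (f0 f1 f2 g0 g1 g2 : R) :=
  qlin6 (f0 * g0) (f0 * g1 + f1 * g0) (f0 * g2 + f2 * g0) (f1 * g1) (f1 * g2 + f2 * g1) (f2 * g2).
Definition sqC (f0 f1 f2 : R) :=
  qlin6 (f0 ^+ 2) (f0 * f1) (f0 * f2) (f1 ^+ 2) (f1 * f2) (f2 ^+ 2).
Definition sqG (f0 f1 f2 : R) :=
  qlin6 (f0 ^+ 2) (2 * f0 * f1) (2 * f0 * f2) (f1 ^+ 2) (2 * f1 * f2) (f2 ^+ 2).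

Ltac unf := cbv [mul tsc qadd qsc dot app tcomb rowmul mmul mcomb Idm Pi psi Psi qlin6 bilq sqC sqG t0 t1 t2 u0 u1 u2 u3 u4 r0 r1 r2].

Lemma app_mmul X Y v : app (mmul X Y) v = app X (app Y v).
Proof. dmat X; dmat Y; dtri v; apply: tri_ext; unf; ring. Qed.
Lemma app_mcomb c0 c1 c2 X Y Z v :
  app (mcomb c0 c1 c2 X Y Z) v = tcomb c0 c1 c2 (app X v) (app Y v) (app Z v).
Proof. dmat X; dmat Y; dmat Z; dtri v; apply: tri_ext; unf; ring. Qed.
Lemma app_Id v : app Idm v = v.
Proof. dtri v; apply: tri_ext; unf; ring. Qed.

Lemma psi_ok X p q p' q' :
  qsc 2 (mul (app X (Pi p q p q)) (app X (Pi p' q' p' q'))) = Psi X X (Pi p q p' q').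
Proof. dmat X; apply: qn_ext; unf; ring. Qed.

Lemma Psi_hom X Y S : Psi X Y (tsc 2 S) = qsc 4 (Psi X Y S).
Proof. dmat X; dmat Y; dtri S; apply: qn_ext; unf; ring. Qed.

Lemma Psi_bil e0 e1 e2 X0 X1 X2 S :
  Psi (mcomb e0 e1 e2 X0 X1 X2) (mcomb e0 e1 e2 X0 X1 X2) S =
  sqG e0 e1 e2 (Psi X0 X0 S) (Psi X0 X1 S) (Psi X0 X2 S) (Psi X1 X1 S) (Psi X1 X2 S) (Psi X2 X2 S).
Proof. dmat X0; dmat X1; dmat X2; dtri S; apply: qn_ext; unf; ring. Qed.

Lemma mul_bil f0 f1 f2 g0 g1 g2 u v w :
  mul (tcomb f0 f1 f2 u v w) (tcomb g0 g1 g2 u v w) =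
  bilq f0 f1 f2 g0 g1 g2 (mul u u) (mul u v) (mul u w) (mul v v) (mul v w) (mul w w).
Proof. dtri u; dtri v; dtri w; apply: qn_ext; unf; ring. Qed.

Lemma mul_sq f0 f1 f2 u v w u' v' w' :
  mul (tcomb f0 f1 f2 u v w) (tcomb f0 f1 f2 u' v' w') =
  sqC f0 f1 f2 (mul u u') (qadd (mul u v') (mul v u')) (qadd (mul u w') (mul w u'))
     (mul v v') (qadd (mul v w') (mul w v')) (mul w w').
Proof. dtri u; dtri v; dtri w; dtri u'; dtri v'; dtri w'; apply: qn_ext; unf; ring. Qed.

Lemma mul_swap a b c d e f g h :
  mul (Pi a b c d) (Pi e f g h) = mul (Pi a b g h) (Pi e f c d).
Proof. apply: qn_ext; unf; ring. Qed.

Lemma mul_tsc c d u v : mul (tsc c u) (tsc d v) = qsc (c * d) (mul u v).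
Proof. dtri u; dtri v; apply: qn_ext; unf; ring. Qed.

Definition tnz (v : tri) := [|| t0 v != 0, t1 v != 0 | t2 v != 0].

Lemma zf (d g : R) : g != 0 -> d * g = 0 -> d = 0.
Proof. by move=> Hg /eqP; rewrite mulf_eq0 (negbTE Hg) orbF => /eqP. Qed.
Arguments zf {d g}.

Lemma cancel_aux (d0 d1 d2 g0 g1 g2 : R) : [|| g0 != 0, g1 != 0 | g2 != 0] ->
  d0 * g0 = 0 -> d0 * g1 + d1 * g0 = 0 -> d0 * g2 + d1 * g1 + d2 * g0 = 0 ->
  d1 * g2 + d2 * g1 = 0 -> d2 * g2 = 0 -> [/\ d0 = 0, d1 = 0 & d2 = 0].
Proof.
move=> Hg E0 E1 E2 E3 E4.
case: (eqVneq g0 0) => [g00 | g0n].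
  rewrite g00 in Hg E1 E2 E3 E4; rewrite !mulr0 !addr0 in E1 E2.
  case: (eqVneq g1 0) => [g10 | g1n].
    rewrite g10 in Hg E2 E3; rewrite !mulr0 !addr0 in E2 E3; rewrite !eqxx /= in Hg.
    by split; [apply: (zf Hg E2) | apply: (zf Hg E3) | apply: (zf Hg E4)].
  have h0 := zf g1n E1; rewrite h0 mul0r add0r in E2.
  have h1 := zf g1n E2; rewrite h1 mul0r add0r in E3.
  by split; [ | | apply: (zf g1n E3)].
have h0 := zf g0n E0; rewrite h0 !mul0r !add0r in E1 E2.
have h1 := zf g0n E1; rewrite h1 mul0r add0r in E2.
by split; [ | | apply: (zf g0n E2)].
Qed.

Lemma mul_cancel a b g : tnz g -> mul a g = mul b g -> a = b.
Proof.
case: a => a0 a1 a2; case: b => b0 b1 b2; case: g => g0 g1 g2; rewrite /tnz /= => Hg [e0 e1 e2 e3 e4].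
have [] := @cancel_aux (a0 - b0) (a1 - b1) (a2 - b2) g0 g1 g2 Hg.
- by transitivity (a0 * g0 - b0 * g0); [ring | rewrite e0 subrr].
- by transitivity ((a0 * g1 + a1 * g0) - (b0 * g1 + b1 * g0)); [ring | rewrite e1 subrr].
- by transitivity ((a0 * g2 + a1 * g1 + a2 * g0) - (b0 * g2 + b1 * g1 + b2 * g0)); [ring | rewrite e2 subrr].
- by transitivity ((a1 * g2 + a2 * g1) - (b1 * g2 + b2 * g1)); [ring | rewrite e3 subrr].
- by transitivity (a2 * g2 - b2 * g2); [ring | rewrite e4 subrr].
by move=> /eqP; rewrite subr_eq0 => /eqP -> /eqP; rewrite subr_eq0 => /eqP -> /eqP; rewrite subr_eq0 => /eqP ->.
Qed.

Arguments mul_cancel {a b g}.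

Lemma Pi_nz (p q pp qq : R) : (p != 0) || (q != 0) -> (pp != 0) || (qq != 0) -> tnz (Pi p q pp qq).
Proof.
rewrite /tnz /Pi /=.
case: (eqVneq p 0) => [->|pn] /=; case: (eqVneq q 0) => [->|qn] //= _;
case: (eqVneq pp 0) => [->|pn'] /=; case: (eqVneq qq 0) => [->|qn'] //= _;
rewrite ?mul0r ?mulr0 ?add0r ?addr0 ?mulf_neq0 ?orbT //.
Qed.

Lemma tsc_nz c v : c != 0 -> tnz v -> tnz (tsc c v).
Proof. by rewrite /tnz /= => Hc; rewrite !mulf_eq0 (negbTE Hc). Qed.


Definition R11 (a b c : R) (B00 B01 B02 B11 B12 B22 : qn) :=
  qlin6 (- (4 * a)) (- (2 * c)) (- 2) 0 0 0 B00 B01 B02 B11 B12 B22.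
Definition R02 (a b c : R) (B00 B01 B02 B11 B12 B22 : qn) :=
  qlin6 (- (8 * a)) (- (4 * c)) (- 2) (- 2) 0 0 B00 B01 B02 B11 B12 B22.
Definition R12 (a b c : R) (B00 B01 B02 B11 B12 B22 C01 : qn) :=
  qadd (qlin6 (8 * a * c) (4 * c ^+ 2 + 8 * a) (4 * c) (2 * c) 2 0 B00 B01 B02 B11 B12 B22)
       (qsc (- (4 * a)) C01).
Definition R22 (a b c : R) (B00 B01 B02 B11 B12 B22 C01 : qn) :=
  qadd (qlin6 (16 * a ^+ 2 - 4 * a * c ^+ 2) (- (2 * c ^+ 3) - 4 * b + 4 * a * c)
         (8 * a - 2 * c ^+ 2) (4 * a - c ^+ 2) 0 1 B00 B01 B02 B11 B12 B22)
       (qsc (2 * b + 2 * a * c) C01).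
Definition RG02 (a b c : R) (D00 D01 D02 D11 D12 D22 : qn) :=
  qlin6 (- (32 * a ^+ 2)) (- (8 * b) - 16 * a * c) (- (16 * a)) (- (8 * a)) (- (2 * c)) (- 2)
    D00 D01 D02 D11 D12 D22.
Definition RG11 (a b c : R) (D00 D01 D02 D11 D12 D22 : qn) :=
  qlin6 (- (32 * a ^+ 2)) (- (16 * b) - 16 * a * c) (- (16 * a)) 0 0 0 D00 D01 D02 D11 D12 D22.
Definition RG12 (a b c : R) (D00 D01 D02 D11 D12 D22 G01 : qn) :=
  qadd (qlin6 (32 * a ^+ 2 * c) (16 * b * c + 16 * a * c ^+ 2) (8 * b + 16 * a * c) 0 0 0
          D00 D01 D02 D11 D12 D22) (qsc (- (4 * a)) G01).
Definition RG22 (a b c : R) (D00 D01 D02 D11 D12 D22 G01 : qn) :=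
  qadd (qlin6 (8 * (4 * b ^+ 2 - 4 * a ^+ 2 * c ^+ 2 + 16 * a ^+ 3))
          (8 * (- (2 * b * c ^+ 2) - 2 * a * c ^+ 3 + 8 * a ^+ 2 * c))
          (8 * (- (2 * b * c) - 2 * a * c ^+ 2 + 8 * a ^+ 2)) (32 * a ^+ 2) (8 * (a * c - b)) (8 * a)
          D00 D01 D02 D11 D12 D22) (qsc (4 * (b + a * c)) G01).


Ltac dq X := case: X => ? ? ? ? ?.
Ltac unfC := cbv [qadd qsc qlin6 bilq sqC sqG R11 R02 R12 R22 RG02 RG11 RG12 RG22 u0 u1 u2 u3 u4].

Lemma combO1 (a b c : R) B00 B01 B02 B11 B12 B22 C01 :
  bilq (- (2 * a)) (- c) (- 1) 2 0 0 B00 B01 B02 B11 B12 B22 =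
  sqC 0 1 0 B00 C01 (R02 a b c B00 B01 B02 B11 B12 B22) (R11 a b c B00 B01 B02 B11 B12 B22)
      (R12 a b c B00 B01 B02 B11 B12 B22 C01) (R22 a b c B00 B01 B02 B11 B12 B22 C01).
Proof. dq B00; dq B01; dq B02; dq B11; dq B12; dq B22; dq C01; apply: qn_ext; unfC; ring. Qed.

Lemma combO2 (a b c : R) B00 B01 B02 B11 B12 B22 C01 :
  bilq (2 * (b ^+ 2 - a ^+ 3)) (- (2 * a * b + a ^+ 2 * c)) (- a ^+ 2) (- (2 * a)) (- c) (- 1)
     B00 B01 B02 B11 B12 B22 =
  sqC (- (2 * a ^+ 2)) (- (b + a * c)) (- a) B00 C01 (R02 a b c B00 B01 B02 B11 B12 B22)
      (R11 a b c B00 B01 B02 B11 B12 B22)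
      (R12 a b c B00 B01 B02 B11 B12 B22 C01) (R22 a b c B00 B01 B02 B11 B12 B22 C01).
Proof. dq B00; dq B01; dq B02; dq B11; dq B12; dq B22; dq C01; apply: qn_ext; unfC; ring. Qed.

Definition o4_0 (a b c : R) := 2 * (b ^+ 4 + 2 * a * b ^+ 3 * c + a ^+ 2 * b ^+ 2 * c ^+ 2 + a ^+ 3 * b ^+ 2
   + 2 * a ^+ 4 * b * c + a ^+ 6).
Definition o4_1 (a b c : R) := 2 * a * b ^+ 3 + a ^+ 2 * b ^+ 2 * c + 2 * a ^+ 4 * b.
Definition o4_2 (a b c : R) := - (a ^+ 2 * b ^+ 2).

Lemma combO3 (a b c : R) B00 B01 B02 B11 B12 B22 C01 :
  bilq (o4_0 a b c) (o4_1 a b c) (o4_2 a b c)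
       (2 * (b ^+ 2 - a ^+ 3)) (- (2 * a * b + a ^+ 2 * c)) (- a ^+ 2)
     B00 B01 B02 B11 B12 B22 =
  sqC (- (2 * (b ^+ 3 + a * b ^+ 2 * c + 2 * a ^+ 3 * b))) (a ^+ 4) (- (a ^+ 2 * b))
      B00 C01 (R02 a b c B00 B01 B02 B11 B12 B22)
      (R11 a b c B00 B01 B02 B11 B12 B22)
      (R12 a b c B00 B01 B02 B11 B12 B22 C01) (R22 a b c B00 B01 B02 B11 B12 B22 C01).
Proof. rewrite /o4_0 /o4_1 /o4_2. dq B00; dq B01; dq B02; dq B11; dq B12; dq B22; dq C01; apply: qn_ext; unfC; ring. Qed.

Lemma combE1 (a b c : R) D00 D01 D02 D11 D12 D22 G01 :
  qsc 8 (bilq (- (2 * a ^+ 2)) (- (b + a * c)) (- a) 2 0 0 D00 D01 D02 D11 D12 D22) =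
  sqG 0 1 0 (qsc 2 D11) G01 (RG02 a b c D00 D01 D02 D11 D12 D22) (RG11 a b c D00 D01 D02 D11 D12 D22)
      (RG12 a b c D00 D01 D02 D11 D12 D22 G01) (RG22 a b c D00 D01 D02 D11 D12 D22 G01).
Proof. dq D00; dq D01; dq D02; dq D11; dq D12; dq D22; dq G01; apply: qn_ext; unfC; ring. Qed.

Lemma combE2 (a b c : R) D00 D01 D02 D11 D12 D22 G01 :
  qsc 8 (bilq (- (2 * (b ^+ 3 + a * b ^+ 2 * c + 2 * a ^+ 3 * b))) (a ^+ 4) (- (a ^+ 2 * b)) 0 1 0
     D00 D01 D02 D11 D12 D22) =
  sqG (- (2 * a ^+ 2)) (- (b + a * c)) (- a) (qsc 2 D11) G01 (RG02 a b c D00 D01 D02 D11 D12 D22)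
      (RG11 a b c D00 D01 D02 D11 D12 D22)
      (RG12 a b c D00 D01 D02 D11 D12 D22 G01) (RG22 a b c D00 D01 D02 D11 D12 D22 G01).
Proof. dq D00; dq D01; dq D02; dq D11; dq D12; dq D22; dq G01; apply: qn_ext; unfC; ring. Qed.

Lemma final_coef (a b c : R) :
  let A := - (a ^+ 3 + a * b * c + b ^+ 2) in
  let B := (b ^+ 2 - A) * a ^+ 2 in
  let C := A * (A - b ^+ 2) in
  [/\ o4_0 a b c - A * (2 * (b ^+ 2 - a ^+ 3)) - B * (- (2 * a)) - C * 2 = 0,
      o4_1 a b c - A * (- (2 * a * b + a ^+ 2 * c)) - B * (- c) - C * 0 = 0 &
      o4_2 a b c - A * (- a ^+ 2) - B * (- 1) - C * 0 = 0].
Proof. rewrite /o4_0 /o4_1 /o4_2 /=; split; ring. Qed.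

Section M.
Variables a1 a2 a3 a5 a6 I : R.
Definition Ltm := Mat (Tri (- (2 * a3)) (- a5) (- (2 * a6))) (Tri (2 * a2) (- I) (2 * a5))
                      (Tri (- (2 * a1)) (- a2) (- (2 * a3))).
Definition Lt v := app Ltm v.
Definition X2 := mmul Ltm Ltm.
Definition Xm (i : nat) := match i with 0 => Idm | 1 => Ltm | _ => X2 end.
Definition al := a2 * a5 + a3 ^+ 2 - a1 * a6 + a3 * I.
Definition be := (a1 * a5 - 2%:R * a2 * a3) * a5 + a2 ^+ 2 * a6 + (a1 * a6 - a3 ^+ 2) * I.
Definition ga := 4%:R * a3 + I.
Definition tl3 e0 e1 e2 v := tcomb e0 e1 e2 (app (Xm 0) v) (app (Xm 1) v) (app (Xm 2) v).
Definition Qf py qy pz qz :=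
  a1 * py ^+ 2 * pz ^+ 2 + a2 * (py ^+ 2 * pz * qz + py * qy * pz ^+ 2)
  + a3 * (py ^+ 2 * qz ^+ 2 + qy ^+ 2 * pz ^+ 2) - I * py * qy * pz * qz
  + a5 * (py * qy * qz ^+ 2 + qy ^+ 2 * pz * qz) + a6 * qy ^+ 2 * qz ^+ 2.
Definition Bq i j P := mul (app (Xm i) P) (app (Xm j) P).
Definition Cd i Pz Py := mul (app (Xm i) Pz) (app (Xm i) Py).
Definition Co i j Pz Py := qadd (mul (app (Xm i) Pz) (app (Xm j) Py)) (mul (app (Xm j) Pz) (app (Xm i) Py)).
Definition Gq i j Py := Psi (Xm i) (Xm j) (Lt Py).

Ltac unfM := cbv [mul tsc qadd qsc dot app tcomb rowmul mmul mcomb Idm Pi psi Psi qlin6 bilq sqC sqG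
  t0 t1 t2 u0 u1 u2 u3 u4 r0 r1 r2 Ltm Lt X2 Xm tl3 Bq Cd Co Gq R11 R02 R12 R22 RG02 RG11 RG12 RG22].

Section Odd.
Variables py qy pz qz : R.
Hypothesis HQ : Qf py qy pz qz = 0.
Let P := Pi py qy pz qz.
Let Sy := Pi py qy py qy.
Let Sz := Pi pz qz pz qz.
Ltac cert h := apply/eqP; rewrite -subr_eq0; apply/eqP;
  transitivity (h * Qf py qy pz qz); [rewrite /Qf /al /be /ga; ring | by rewrite HQ mulr0].

Lemma rel00 : Cd 0 Sz Sy = Bq 0 0 P.
Proof. apply: qn_ext; rewrite /P /Sy /Sz; unfM; ring. Qed.
Lemma rel11 : Cd 1 Sz Sy = R11 al be ga (Bq 0 0 P) (Bq 0 1 P) (Bq 0 2 P) (Bq 1 1 P) (Bq 1 2 P) (Bq 2 2 P).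
Proof.
apply: qn_ext; rewrite /P /Sy /Sz; unfM.
- cert (4 * a6).
- cert (- (8 * a5)).
- cert (- (4 * I) + 8 * a3).
- cert (- (8 * a2)).
- cert (4 * a1).
Qed.
Lemma rel02 : Co 0 2 Sz Sy = R02 al be ga (Bq 0 0 P) (Bq 0 1 P) (Bq 0 2 P) (Bq 1 1 P) (Bq 1 2 P) (Bq 2 2 P).
Proof.
apply: qn_ext; rewrite /P /Sy /Sz; unfM.
- cert (8 * a6).
- cert (- (16 * a5)).
- cert (- (8 * I) + 16 * a3).
- cert (- (16 * a2)).
- cert (8 * a1).
Qed.
Lemma rel12 : Co 1 2 Sz Sy = R12 al be ga (Bq 0 0 P) (Bq 0 1 P) (Bq 0 2 P) (Bq 1 1 P) (Bq 1 2 P) (Bq 2 2 P) (Co 0 1 Sz Sy).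
Proof.
apply: qn_ext; rewrite /P /Sy /Sz; unfM.
- cert (- (8 * I * a6) - 32 * a3 * a6).
- cert (16 * I * a5 + 64 * a3 * a5).
- cert (16 * I * a3 + 8 * I ^+ 2 - 64 * a3 ^+ 2).
- cert (16 * I * a2 + 64 * a2 * a3).
- cert (- (8 * I * a1) - 32 * a1 * a3).
Qed.
Lemma rel22 : Cd 2 Sz Sy = R22 al be ga (Bq 0 0 P) (Bq 0 1 P) (Bq 0 2 P) (Bq 1 1 P) (Bq 1 2 P) (Bq 2 2 P) (Co 0 1 Sz Sy).
Proof.
apply: qn_ext; rewrite /P /Sy /Sz; unfM.
- cert (16 * I * a3 * a6 + 4 * I ^+ 2 * a6 + 16 * a1 * a6 ^+ 2 - 16 * a2 * a5 * a6 + 48 * a3 ^+ 2 * a6).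
- cert (- (32 * I * a3 * a5) - 8 * I ^+ 2 * a5 - 32 * a1 * a5 * a6 + 32 * a2 * a5 ^+ 2 - 96 * a3 ^+ 2 * a5).
- cert (- (16 * I * a1 * a6) + 16 * I * a2 * a5 - 16 * I * a3 ^+ 2 - 8 * I ^+ 2 * a3 - 4 * I ^+ 3 + 32 * a1 * a3 * a6 - 32 * a2 * a3 * a5 + 96 * a3 ^+ 3).
- cert (- (32 * I * a2 * a3) - 8 * I ^+ 2 * a2 - 32 * a1 * a2 * a6 - 96 * a2 * a3 ^+ 2 + 32 * a2 ^+ 2 * a5).
- cert (16 * I * a1 * a3 + 4 * I ^+ 2 * a1 - 16 * a1 * a2 * a5 + 48 * a1 * a3 ^+ 2 + 16 * a1 ^+ 2 * a6).
Qed.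
End Odd.

Section Even.
Variables py qy : R.
Let Sy := Pi py qy py qy.
Lemma erel00 : Gq 0 0 Sy = qsc 2 (Bq 1 1 Sy).
Proof. apply: qn_ext; rewrite /Sy; unfM; ring. Qed.
Lemma erel02 : Gq 0 2 Sy = RG02 al be ga (Bq 0 0 Sy) (Bq 0 1 Sy) (Bq 0 2 Sy) (Bq 1 1 Sy) (Bq 1 2 Sy) (Bq 2 2 Sy).
Proof. apply: qn_ext; rewrite /Sy; unfM; rewrite /al /be /ga; ring. Qed.
Lemma erel11 : Gq 1 1 Sy = RG11 al be ga (Bq 0 0 Sy) (Bq 0 1 Sy) (Bq 0 2 Sy) (Bq 1 1 Sy) (Bq 1 2 Sy) (Bq 2 2 Sy).
Proof. apply: qn_ext; rewrite /Sy; unfM; rewrite /al /be /ga; ring. Qed.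
Lemma erel12 : Gq 1 2 Sy = RG12 al be ga (Bq 0 0 Sy) (Bq 0 1 Sy) (Bq 0 2 Sy) (Bq 1 1 Sy) (Bq 1 2 Sy) (Bq 2 2 Sy) (Gq 0 1 Sy).
Proof. apply: qn_ext; rewrite /Sy; unfM; rewrite /al /be /ga; ring. Qed.
Lemma erel22 : Gq 2 2 Sy = RG22 al be ga (Bq 0 0 Sy) (Bq 0 1 Sy) (Bq 0 2 Sy) (Bq 1 1 Sy) (Bq 1 2 Sy) (Bq 2 2 Sy) (Gq 0 1 Sy).
Proof. apply: qn_ext; rewrite /Sy; unfM; rewrite /al /be /ga; ring. Qed.
End Even.


Arguments rel11 {py qy pz qz}.
Arguments rel02 {py qy pz qz}.
Arguments rel12 {py qy pz qz}.
Arguments rel22 {py qy pz qz}.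

Lemma qsc_qsc c d x : qsc c (qsc d x) = qsc (c * d) x.
Proof. case: x => *; apply: qn_ext; rewrite /=; ring. Qed.
Lemma qsc_inj (c : R) a b : c != 0 -> qsc c a = qsc c b -> a = b.
Proof.
move=> Hc; case: a => x0 x1 x2 x3 x4; case: b => y0 y1 y2 y3 y4 [] /=.
by move=> /(mulfI Hc) -> /(mulfI Hc) -> /(mulfI Hc) -> /(mulfI Hc) -> /(mulfI Hc) ->.
Qed.
Arguments qsc_inj {c a b}.
Lemma Pi_sym a b c d : Pi a b c d = Pi c d a b.
Proof. apply: tri_ext; rewrite /=; ring. Qed.
Lemma tl3_200 v : tl3 2 0 0 v = tsc 2 v.
Proof. case: v => *; apply: tri_ext; unfM; ring. Qed.
Lemma tl3_010 v : tl3 0 1 0 v = Lt v.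
Proof. case: v => *; apply: tri_ext; unfM; ring. Qed.
Lemma tl3_mcomb e0 e1 e2 v : tl3 e0 e1 e2 v = app (mcomb e0 e1 e2 (Xm 0) (Xm 1) (Xm 2)) v.
Proof. by rewrite app_mcomb. Qed.
Lemma two_nz : (2 : R) != 0. Proof. by rewrite pnatr_eq0. Qed.
Lemma eight_nz : (8 : R) != 0. Proof. by rewrite pnatr_eq0. Qed.

Lemma evenC py qy pz qz pw qw e0 e1 e2 :
  tsc 2 (Pi pz qz pw qw) = Lt (Pi py qy py qy) ->
  qsc 8 (mul (tl3 e0 e1 e2 (Pi pz qz pz qz)) (tl3 e0 e1 e2 (Pi pw qw pw qw))) =
  sqG e0 e1 e2 (Gq 0 0 (Pi py qy py qy)) (Gq 0 1 (Pi py qy py qy)) (Gq 0 2 (Pi py qy py qy))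
     (Gq 1 1 (Pi py qy py qy)) (Gq 1 2 (Pi py qy py qy)) (Gq 2 2 (Pi py qy py qy)).
Proof.
move=> Hc; rewrite !tl3_mcomb.
rewrite (_ : (8 : R) = 4 * 2); last by rewrite -natrM.
by rewrite -qsc_qsc psi_ok -Psi_hom Hc Psi_bil.
Qed.

Arguments evenC {py qy pz qz pw qw}.

Lemma even_step py qy pz qz pw qw (En Eo : tri) f0 f1 f2 g0 g1 g2 e0 e1 e2 :
  tsc 2 (Pi pz qz pw qw) = Lt (Pi py qy py qy) ->
  Eo = tl3 g0 g1 g2 (Pi py qy py qy) -> tnz Eo ->
  mul En Eo = mul (tl3 e0 e1 e2 (Pi pz qz pz qz)) (tl3 e0 e1 e2 (Pi pw qw pw qw)) ->
  qsc 8 (bilq f0 f1 f2 g0 g1 g2 (Bq 0 0 (Pi py qy py qy)) (Bq 0 1 (Pi py qy py qy))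
     (Bq 0 2 (Pi py qy py qy)) (Bq 1 1 (Pi py qy py qy)) (Bq 1 2 (Pi py qy py qy))
     (Bq 2 2 (Pi py qy py qy))) =
  sqG e0 e1 e2 (Gq 0 0 (Pi py qy py qy)) (Gq 0 1 (Pi py qy py qy)) (Gq 0 2 (Pi py qy py qy))
     (Gq 1 1 (Pi py qy py qy)) (Gq 1 2 (Pi py qy py qy)) (Gq 2 2 (Pi py qy py qy)) ->
  En = tl3 f0 f1 f2 (Pi py qy py qy).
Proof.
move=> Hc HEo Hnz HM Hcomb.
apply: (mul_cancel Hnz); apply: (qsc_inj eight_nz).
rewrite HM (evenC e0 e1 e2 Hc) -Hcomb HEo /tl3 mul_bil.
by [].
Qed.

Lemma odd_step py qy pz qz (Kn Ko : tri) f0 f1 f2 g0 g1 g2 e0 e1 e2 :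
  Qf py qy pz qz = 0 ->
  Ko = tl3 g0 g1 g2 (Pi py qy pz qz) -> tnz Ko ->
  mul Kn Ko = mul (tl3 e0 e1 e2 (Pi pz qz pz qz)) (tl3 e0 e1 e2 (Pi py qy py qy)) ->
  bilq f0 f1 f2 g0 g1 g2 (Bq 0 0 (Pi py qy pz qz)) (Bq 0 1 (Pi py qy pz qz)) (Bq 0 2 (Pi py qy pz qz))
     (Bq 1 1 (Pi py qy pz qz)) (Bq 1 2 (Pi py qy pz qz)) (Bq 2 2 (Pi py qy pz qz)) =
  sqC e0 e1 e2 (Bq 0 0 (Pi py qy pz qz)) (Co 0 1 (Pi pz qz pz qz) (Pi py qy py qy))
    (R02 al be ga (Bq 0 0 (Pi py qy pz qz)) (Bq 0 1 (Pi py qy pz qz)) (Bq 0 2 (Pi py qy pz qz))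
     (Bq 1 1 (Pi py qy pz qz)) (Bq 1 2 (Pi py qy pz qz)) (Bq 2 2 (Pi py qy pz qz)))
    (R11 al be ga (Bq 0 0 (Pi py qy pz qz)) (Bq 0 1 (Pi py qy pz qz)) (Bq 0 2 (Pi py qy pz qz))
     (Bq 1 1 (Pi py qy pz qz)) (Bq 1 2 (Pi py qy pz qz)) (Bq 2 2 (Pi py qy pz qz)))
    (R12 al be ga (Bq 0 0 (Pi py qy pz qz)) (Bq 0 1 (Pi py qy pz qz)) (Bq 0 2 (Pi py qy pz qz))
     (Bq 1 1 (Pi py qy pz qz)) (Bq 1 2 (Pi py qy pz qz)) (Bq 2 2 (Pi py qy pz qz))
     (Co 0 1 (Pi pz qz pz qz) (Pi py qy py qy)))
    (R22 al be ga (Bq 0 0 (Pi py qy pz qz)) (Bq 0 1 (Pi py qy pz qz)) (Bq 0 2 (Pi py qy pz qz))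
     (Bq 1 1 (Pi py qy pz qz)) (Bq 1 2 (Pi py qy pz qz)) (Bq 2 2 (Pi py qy pz qz))
     (Co 0 1 (Pi pz qz pz qz) (Pi py qy py qy))) ->
  Kn = tl3 f0 f1 f2 (Pi py qy pz qz).
Proof.
move=> HQ HKo Hnz HM Hcomb.
apply: (mul_cancel Hnz); rewrite HM /tl3 mul_sq.
have := rel00 py qy pz qz; rewrite /Cd => ->.
have := rel11 HQ; rewrite /Cd => ->.
have := rel22 HQ; rewrite /Cd => ->.
have := rel02 HQ; rewrite /Co => ->.
have := rel12 HQ; rewrite /Co => ->.
rewrite HKo mul_bil; exact: esym Hcomb.
Qed.

Lemma Qf_of_rel pm qm p0 q0 pp qp :
  tsc 2 (Pi pp qp pm qm) = Lt (Pi p0 q0 p0 q0) -> Qf pm qm p0 q0 = 0 /\ Qf pp qp p0 q0 = 0.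
Proof.
move=> E.
have [e0 e1 e2] : [/\ 2 * (pp * pm) = t0 (Lt (Pi p0 q0 p0 q0)),
   2 * (pp * qm + qp * pm) = t1 (Lt (Pi p0 q0 p0 q0)) & 2 * (qp * qm) = t2 (Lt (Pi p0 q0 p0 q0))].
  by rewrite -E.
split; apply: (zf two_nz).
- rewrite (_ : Qf pm qm p0 q0 * 2 = - t2 (Lt (Pi p0 q0 p0 q0)) * pm ^+ 2
     + t1 (Lt (Pi p0 q0 p0 q0)) * (pm * qm) - t0 (Lt (Pi p0 q0 p0 q0)) * qm ^+ 2); last first.
    by rewrite /Qf; unfM; ring.
  rewrite -e0 -e1 -e2; ring.
- rewrite (_ : Qf pp qp p0 q0 * 2 = - t2 (Lt (Pi p0 q0 p0 q0)) * pp ^+ 2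
     + t1 (Lt (Pi p0 q0 p0 q0)) * (pp * qp) - t0 (Lt (Pi p0 q0 p0 q0)) * qp ^+ 2); last first.
    by rewrite /Qf; unfM; ring.
  rewrite -e0 -e1 -e2; ring.
Qed.

Arguments Qf_of_rel {pm qm p0 q0 pp qp}.
Lemma t0_tl3 f0 f1 f2 v : t0 (tl3 f0 f1 f2 v) = f0 * t0 (app (Xm 0) v) + f1 * t0 (app (Xm 1) v) + f2 * t0 (app (Xm 2) v).
Proof. by []. Qed.
Lemma t2_tl3 f0 f1 f2 v : t2 (tl3 f0 f1 f2 v) = f0 * t2 (app (Xm 0) v) + f1 * t2 (app (Xm 1) v) + f2 * t2 (app (Xm 2) v).
Proof. by []. Qed.
Lemma t0_tscPi c a b d e : t0 (tsc c (Pi a b d e)) = c * (a * d). Proof. by []. Qed.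
Lemma t2_tscPi c a b d e : t2 (tsc c (Pi a b d e)) = c * (b * e). Proof. by []. Qed.

Section Seq.
Variables p q : nat -> R.
Hypothesis H1 : forall m, tsc 2 (Pi (p m.+2) (q m.+2) (p m) (q m)) =
  Lt (Pi (p m.+1) (q m.+1) (p m.+1) (q m.+1)).
Hypothesis Hnz : forall n, (p n != 0) || (q n != 0).
Let Pn i j := Pi (p i) (q i) (p j) (q j).

Lemma PnZ i j : tnz (tsc 2 (Pn i j)).
Proof. by apply: tsc_nz two_nz _; apply: Pi_nz. Qed.

Lemma QfS c : Qf (p c) (q c) (p c.+1) (q c.+1) = 0.
Proof. by case: (Qf_of_rel (H1 c)). Qed.

Lemma E2 m : tsc 2 (Pn m.+4 m) = tl3 (- (2 * al ^+ 2)) (- (be + al * ga)) (- al) (Pn m.+2 m.+2).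
Proof.
apply: (@even_step _ _ (p m.+3) (q m.+3) (p m.+1) (q m.+1) _ (tsc 2 (Pn m.+2 m.+2)) _ _ _ 2 0 0 0 1 0).
- exact: H1.
- by rewrite tl3_200.
- exact: PnZ.
- by rewrite !tl3_010 mul_tsc mul_swap -mul_tsc H1 H1.
- by rewrite erel00 erel02 erel11 erel12 erel22; apply: combE1.
Qed.

Lemma E3 m : tsc 2 (Pn m.+4.+2 m) = tl3 (- (2 * (be ^+ 3 + al * be ^+ 2 * ga + 2 * al ^+ 3 * be)))
   (al ^+ 4) (- (al ^+ 2 * be)) (Pn m.+3 m.+3).
Proof.
apply: (@even_step _ _ (p m.+4) (q m.+4) (p m.+2) (q m.+2) _ (tsc 2 (Pn m.+4 m.+2)) _ _ _ 0 1 0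
   (- (2 * al ^+ 2)) (- (be + al * ga)) (- al)).
- exact: H1.
- by rewrite tl3_010 H1.
- exact: PnZ.
- by rewrite mul_tsc mul_swap -mul_tsc (E2 m.+2) (E2 m).
- by rewrite erel00 erel02 erel11 erel12 erel22; apply: combE2.
Qed.

Lemma K2 c : tsc 2 (Pn c.+3 c) = tl3 (- (2 * al)) (- ga) (- 1) (Pn c.+1 c.+2).
Proof.
apply: (@odd_step _ _ _ _ _ (tsc 2 (Pn c.+2 c.+1)) _ _ _ 2 0 0 0 1 0).
- exact: QfS.
- by rewrite tl3_200 Pi_sym.
- exact: PnZ.
- by rewrite !tl3_010 mul_tsc mul_swap -mul_tsc H1 H1.
- exact: combO1.
Qed.

Lemma K3 c : tsc 2 (Pn c.+4.+1 c) = tl3 (2 * (be ^+ 2 - al ^+ 3)) (- (2 * al * be + al ^+ 2 * ga)) (- al ^+ 2)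
   (Pn c.+2 c.+3).
Proof.
apply: (@odd_step _ _ _ _ _ (tsc 2 (Pn c.+4 c.+1)) _ _ _ (- (2 * al)) (- ga) (- 1)
   (- (2 * al ^+ 2)) (- (be + al * ga)) (- al)).
- exact: QfS.
- exact: K2 c.+1.
- exact: PnZ.
- by rewrite mul_tsc mul_swap -mul_tsc (E2 c.+1) (E2 c).
- exact: combO2.
Qed.

Lemma K4 c : tsc 2 (Pn c.+4.+3 c) = tl3 (o4_0 al be ga) (o4_1 al be ga) (o4_2 al be ga) (Pn c.+3 c.+4).
Proof.
apply: (@odd_step _ _ _ _ _ (tsc 2 (Pn c.+4.+2 c.+1)) _ _ _
   (2 * (be ^+ 2 - al ^+ 3)) (- (2 * al * be + al ^+ 2 * ga)) (- al ^+ 2)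
   (- (2 * (be ^+ 3 + al * be ^+ 2 * ga + 2 * al ^+ 3 * be))) (al ^+ 4) (- (al ^+ 2 * be))).
- exact: QfS.
- exact: K3 c.+1.
- exact: PnZ.
- by rewrite mul_tsc mul_swap -mul_tsc (E3 c.+1) (E3 c).
- exact: combO3.
Qed.

Lemma somos_pq n :
  let A := - (al ^+ 3 + al * be * ga + be ^+ 2) in
  let B := (be ^+ 2 - A) * al ^+ 2 in
  let C := A * (A - be ^+ 2) in
  p n.+4.+3 * p n = A * p n.+4.+2 * p n.+1 + B * p n.+4.+1 * p n.+2 + C * p n.+4 * p n.+3 /\ q n.+4.+3 * q n = A * q n.+4.+2 * q n.+1 + B * q n.+4.+1 * q n.+2 + C * q n.+4 * q n.+3.
Proof.
move=> A B C.
have k4 := K4 n; have k3 := K3 n.+1; have k2 := K2 n.+2.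
have k1 : tsc 2 (Pn n.+4 n.+3) = tl3 2 0 0 (Pn n.+3 n.+4) by rewrite tl3_200 /Pn Pi_sym.
have [f1 f2 f3] := final_coef al be ga.
rewrite /Pn in k1 k2 k3 k4.
move: (Pi (p n.+3) (q n.+3) (p n.+4) (q n.+4)) k1 k2 k3 k4 => X k1 k2 k3 k4.
split.
- move: (congr1 t0 k1) (congr1 t0 k2) (congr1 t0 k3) (congr1 t0 k4); rewrite !t0_tscPi !t0_tl3.
  move: (t0 (app (Xm 0) X)) (t0 (app (Xm 1) X)) (t0 (app (Xm 2) X)) => y0 y1 y2 e1 e2 e3 e4.
  apply/eqP; rewrite -subr_eq0; apply/eqP; apply: (zf two_nz).
  transitivity (2 * (p n.+4.+3 * p n) - A * (2 * (p n.+4.+2 * p n.+1)) - B * (2 * (p n.+4.+1 * p n.+2))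
     - C * (2 * (p n.+4 * p n.+3))); first by ring.
  rewrite e1 e2 e3 e4.
  transitivity ((o4_0 al be ga - A * (2 * (be ^+ 2 - al ^+ 3)) - B * (- (2 * al)) - C * 2) * y0
    + (o4_1 al be ga - A * (- (2 * al * be + al ^+ 2 * ga)) - B * (- ga) - C * 0) * y1
    + (o4_2 al be ga - A * (- al ^+ 2) - B * (- 1) - C * 0) * y2); first by ring.
  by rewrite f1 f2 f3; ring.
- move: (congr1 t2 k1) (congr1 t2 k2) (congr1 t2 k3) (congr1 t2 k4); rewrite !t2_tscPi !t2_tl3.
  move: (t2 (app (Xm 0) X)) (t2 (app (Xm 1) X)) (t2 (app (Xm 2) X)) => y0 y1 y2 e1 e2 e3 e4.
  apply/eqP; rewrite -subr_eq0; apply/eqP; apply: (zf two_nz).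
  transitivity (2 * (q n.+4.+3 * q n) - A * (2 * (q n.+4.+2 * q n.+1)) - B * (2 * (q n.+4.+1 * q n.+2))
     - C * (2 * (q n.+4 * q n.+3))); first by ring.
  rewrite e1 e2 e3 e4.
  transitivity ((o4_0 al be ga - A * (2 * (be ^+ 2 - al ^+ 3)) - B * (- (2 * al)) - C * 2) * y0
    + (o4_1 al be ga - A * (- (2 * al * be + al ^+ 2 * ga)) - B * (- ga) - C * 0) * y1
    + (o4_2 al be ga - A * (- al ^+ 2) - B * (- 1) - C * 0) * y2); first by ring.
  by rewrite f1 f2 f3; ring.
Qed.
End Seq.
End M.
End Gen.


Section Main.
Variable R : numFieldType.

Lemma sum3 (F : 'I_3 -> R) : \sum_(k < 3) F k = F (inord 0) + F (inord 1) + F (inord 2).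
Proof.
rewrite !big_ord_recl big_ord0 addr0 addrA.
by congr (F _ + F _ + F _); apply: val_inj; rewrite /= inordK.
Qed.

Lemma cmpV0 (s t : R) : cmp (Vq s t) 0 = s ^+ 2.
Proof. by rewrite /cmp /Vq !mxE !inordK. Qed.
Lemma cmpV1 (s t : R) : cmp (Vq s t) 1 = s * t.
Proof. by rewrite /cmp /Vq !mxE !inordK. Qed.
Lemma cmpV2 (s t : R) : cmp (Vq s t) 2 = t ^+ 2.
Proof. by rewrite /cmp /Vq !mxE !inordK. Qed.

Lemma cmpMV (M : 'M[R]_3) (v : 'cV[R]_3) i :
  cmp (M *m v) i = ent M i 0 * cmp v 0 + ent M i 1 * cmp v 1 + ent M i 2 * cmp v 2.
Proof. by rewrite /cmp /ent mxE sum3. Qed.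

Lemma cmpX0 (x y : 'cV[R]_3) : cmp (cross3 x y) 0 = cmp x 1 * cmp y 2 - cmp x 2 * cmp y 1.
Proof. by rewrite {1}/cmp /cross3 !mxE !inordK. Qed.
Lemma cmpX1 (x y : 'cV[R]_3) : cmp (cross3 x y) 1 = cmp x 2 * cmp y 0 - cmp x 0 * cmp y 2.
Proof. by rewrite {1}/cmp /cross3 !mxE !inordK. Qed.
Lemma cmpX2 (x y : 'cV[R]_3) : cmp (cross3 x y) 2 = cmp x 0 * cmp y 1 - cmp x 1 * cmp y 0.
Proof. by rewrite {1}/cmp /cross3 !mxE !inordK. Qed.

Lemma bformE (M : 'M[R]_3) x y : bform M x y =
  \sum_(k < 3) \sum_(j < 3) x j 0 * M j k * y k 0.
Proof.
rewrite /bform mxE; apply: eq_bigr => k _; rewrite mxE big_distrl /=.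
by apply: eq_bigr => j _; rewrite mxE.
Qed.

Lemma bformE3 (M : 'M[R]_3) x y : bform M x y =
  cmp x 0 * ent M 0 0 * cmp y 0 + cmp x 1 * ent M 1 0 * cmp y 0 + cmp x 2 * ent M 2 0 * cmp y 0
+ (cmp x 0 * ent M 0 1 * cmp y 1 + cmp x 1 * ent M 1 1 * cmp y 1 + cmp x 2 * ent M 2 1 * cmp y 1)
+ (cmp x 0 * ent M 0 2 * cmp y 2 + cmp x 1 * ent M 1 2 * cmp y 2 + cmp x 2 * ent M 2 2 * cmp y 2).
Proof. by rewrite bformE !sum3 /cmp /ent. Qed.

Lemma entT (M : 'M[R]_3) : M^T = M -> forall i j, ent M i j = ent M j i.
Proof. by move=> sym i j; rewrite /ent -{1}sym mxE. Qed.
End Main.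
Arguments entT {R M}.


Arguments tsc {R}.
Arguments Pi {R}.
Arguments Lt {R}.
Arguments Ltm {R}.
Arguments app {R}.
Arguments Qf {R}.
Arguments al {R}.
Arguments be {R}.
Arguments ga {R}.
Section J.
Variable R : numFieldType.
Variables (A B : 'M[R]_3).
Hypotheses (symA : A^T = A) (symB : B^T = B).

Ltac expand := rewrite /Fvec ?cmpX0 ?cmpX1 ?cmpX2 ?cmpMV ?bformE3 ?cmpV0 ?cmpV1 ?cmpV2
  ?(entT symA 1 0) ?(entT symA 2 0) ?(entT symA 2 1) ?(entT symB 1 0) ?(entT symB 2 0) ?(entT symB 2 1).

Lemma step_rel pm qm p0 q0 J :
  Dn B pm qm p0 q0 != 0 -> Jval A B pm qm p0 q0 = J ->
  tsc 2 (Pi ((qm * cmp (Fvec A B p0 q0) 0 - pm * cmp (Fvec A B p0 q0) 1) / Dn B pm qm p0 q0)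
            ((qm * cmp (Fvec A B p0 q0) 1 - pm * cmp (Fvec A B p0 q0) 2) / Dn B pm qm p0 q0) pm qm)
  = Lt (a1 A B J) (a2 A B J) (a3 A B J) (a5 A B J) (a6 A B J) (Ic A B J) (Pi p0 q0 p0 q0).
Proof.
move=> HD <-; rewrite /Jval -/(Dn B pm qm p0 q0).
move: HD; rewrite /Dn => HD.
rewrite /a1 /a2 /a3 /a5 /a6 /Ic.
apply: tri_ext; rewrite /Lt /app /dot /Pi /tsc /Ltm /=; expand; move: HD; expand => HD.
- field. exact: HD.
- field. exact: HD.
- field. exact: HD.
Qed.
End J.
Section J2.
Variable R : numFieldType.
Variables (A B : 'M[R]_3).
Hypotheses (symA : A^T = A) (symB : B^T = B).
Ltac expand := rewrite /Fvec ?cmpX0 ?cmpX1 ?cmpX2 ?cmpMV ?bformE3 ?cmpV0 ?cmpV1 ?cmpV2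
  ?(entT symA 1 0) ?(entT symA 2 0) ?(entT symA 2 1) ?(entT symB 1 0) ?(entT symB 2 0) ?(entT symB 2 1).
Lemma Jstep pm qm p0 q0 pp qp J :
  tsc 2 (Pi pp qp pm qm) = Lt (a1 A B J) (a2 A B J) (a3 A B J) (a5 A B J) (a6 A B J) (Ic A B J) (Pi p0 q0 p0 q0) ->
  Dn B p0 q0 pp qp != 0 -> Jval A B p0 q0 pp qp = J.
Proof.
move=> Hr HD.
have [_ HQ] := @Qf_of_rel _ _ _ _ _ _ _ _ _ _ _ _ _ Hr.
rewrite /Jval -/(Dn B p0 q0 pp qp).
have E : bform A (Vq p0 q0) (Vq pp qp) = J * Dn B p0 q0 pp qp.
  apply/eqP; rewrite -subr_eq0; apply/eqP.
  rewrite -HQ /Qf /Dn /a1 /a2 /a3 /a5 /a6 /Ic; expand; ring.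
by rewrite E mulfK.
Qed.
End J2.



Theorem corollary3 (R : numFieldType) (A B : 'M[R]_3)
  (symA : A^T = A) (symB : B^T = B) (p q : nat -> R)
  (hD : forall n, (1 <= n)%N -> Dn B (p n.-1) (q n.-1) (p n) (q n) != 0)
  (hp : forall n, (1 <= n)%N ->
     p n.+1 = (q n.-1 * cmp (Fvec A B (p n) (q n)) 0
               - p n.-1 * cmp (Fvec A B (p n) (q n)) 1)
              / Dn B (p n.-1) (q n.-1) (p n) (q n))
  (hq : forall n, (1 <= n)%N ->
     q n.+1 = (q n.-1 * cmp (Fvec A B (p n) (q n)) 1
               - p n.-1 * cmp (Fvec A B (p n) (q n)) 2)
              / Dn B (p n.-1) (q n.-1) (p n) (q n)) :
  let J := Jval A B (p 0%N) (q 0%N) (p 1%N) (q 1%N) in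
  somos7 (Acoef A B J) (Bcoef A B J) (Ccoef A B J) p /\
  somos7 (Acoef A B J) (Bcoef A B J) (Ccoef A B J) q.
Proof.
move=> J.
have hD' : forall n, Dn B (p n) (q n) (p n.+1) (q n.+1) != 0 by move=> n; exact: (hD n.+1).
have hp' : forall n, p n.+2 = (q n * cmp (Fvec A B (p n.+1) (q n.+1)) 0
               - p n * cmp (Fvec A B (p n.+1) (q n.+1)) 1) / Dn B (p n) (q n) (p n.+1) (q n.+1).
  by move=> n; exact: (hp n.+1).
have hq' : forall n, q n.+2 = (q n * cmp (Fvec A B (p n.+1) (q n.+1)) 1
               - p n * cmp (Fvec A B (p n.+1) (q n.+1)) 2) / Dn B (p n) (q n) (p n.+1) (q n.+1).
  by move=> n; exact: (hq n.+1).
have Hrel : forall n, Jval A B (p n) (q n) (p n.+1) (q n.+1) = J ->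
   tsc 2 (Pi (p n.+2) (q n.+2) (p n) (q n)) =
   Lt (a1 A B J) (a2 A B J) (a3 A B J) (a5 A B J) (a6 A B J) (Ic A B J) (Pi (p n.+1) (q n.+1) (p n.+1) (q n.+1)).
  by move=> n HJ; rewrite hp' hq'; apply: step_rel.
have HJ : forall n, Jval A B (p n) (q n) (p n.+1) (q n.+1) = J.
  elim=> [|n IH]; first by [].
  exact: (@Jstep R A B symA symB _ _ _ _ _ _ _ (Hrel n IH) (hD' n.+1)).
have H1 := fun n => Hrel n (HJ n).
have Hnz : forall n, (p n != 0) || (q n != 0).
  move=> n; rewrite -negb_and; apply/negP => /andP [/eqP Hp0 /eqP Hq0].
  have := hD' n; rewrite /Dn bformE3 !cmpV0 !cmpV1 !cmpV2 Hp0 Hq0.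
  by rewrite expr2 !(mul0r, mulr0, add0r, addr0) eqxx.
have S := @somos_pq R (a1 A B J) (a2 A B J) (a3 A B J) (a5 A B J) (a6 A B J) (Ic A B J) p q H1 Hnz.
split=> n; rewrite !addnS !addn0; by case: (S n).
Qed.
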